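(* Let $\epsilon=\epsilon_1\cdots\epsilon_n$ be a sequence and let $\epsilon'$ be the sequence obtained by applying Algorithm A (described below) to $\epsilon$. Then $\operatorname{Em}(p,\epsilon)=\operatorname{Em}(q,\epsilon')$ and $\operatorname{Em}(q,\epsilon)=\operatorname{Em}(p,\epsilon')$; that is, the algorithm exchanges the occurrences of $p=\underline{0102}$ and $q=\underline{0112}$.
   Context: The reduction of an integer word replaces each occurrence of its $k$-th smallest distinct value by $k-1$; a consecutive pattern $\underline{p_1p_2p_3p_4}$ occurs in a sequence at position $i$ if the reduction of its entries in positions $i,\dots,i+3$ equals $p_1p_2p_3p_4$, and $\operatorname{Em}(p,\epsilon)$ denotes the set of positions of occurrences of $p$ in $\epsilon$. Let $p=\underline{0102}$ and $q=\underline{0112}$. Algorithm A, on input an integer sequence $\mathrm{seq}=\epsilon_1\cdots\epsilon_n$: let $E_p$, $E_q$ be the sets of positions of occurrences of $p$, resp. $q$, in the input sequence; set $\mathrm{last}:=$ null. For $i=1,2,\dots,n$ in order: let $N_p,N_q$ be the sets of positions of occurrences of $p$, resp. $q$, in the current sequence. If $i-2\in E_p$: set $\mathrm{last}:=\mathrm{seq}[i]$ and $\mathrm{seq}[i]:=\mathrm{seq}[i-1]$. Else if $i-2\in E_q$: set $\mathrm{last}:=\mathrm{seq}[i]$ and $\mathrm{seq}[i]:=\mathrm{seq}[i-2]$. Else if $i-2\in N_p$ or $i-2\in N_q$: swap the values of $\mathrm{seq}[i]$ and $\mathrm{last}$. Output $\mathrm{seq}$. *)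

(* Defs.v *)
From mathcomp Require Import all_boot all_order all_algebra.
Set Implicit Arguments. Unset Strict Implicit. Unset Printing Implicit Defensive.
Import Order.TTheory GRing.Theory Num.Theory.
Local Open Scope ring_scope.

Definition red (w : seq int) : seq nat :=
  [seq size (undup [seq y <- w | y < x]) | x <- w].

(* Occurrence of the consecutive pattern pat (of length 4) in s at the
   1-indexed position i: red (s_i s_{i+1} s_{i+2} s_{i+3}) = pat. *)
Definition occurs (pat : seq nat) (s : seq int) (i : nat) : bool :=
  [&& (1 <= i)%N, (i + 3 <= size s)%N & red (take 4 (drop i.-1 s)) == pat].

Definition Em (pat : seq nat) (s : seq int) : seq nat :=
  [seq i <- iota 1 (size s) | occurs pat s i].

Definition pat_p : seq nat := [:: 0; 1; 0; 2]%N.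
Definition pat_q : seq nat := [:: 0; 1; 1; 2]%N.

(* One step of Algorithm A at (1-indexed) position i.
   e0 = input sequence, state = (current sequence, last).
   seq[i] is nth 0 s i.-1 ; seq[i-1] is nth 0 s (i-2) ; seq[i-2] is nth 0 s (i-3). *)
Definition algA_step (e0 : seq int) (st : seq int * option int) (i : nat)
  : seq int * option int :=
  let: (s, last) := st in
  if occurs pat_p e0 (i - 2) then
    (set_nth 0 s i.-1 (nth 0 s (i - 2)), Some (nth 0 s i.-1))
  else if occurs pat_q e0 (i - 2) then
    (set_nth 0 s i.-1 (nth 0 s (i - 3)), Some (nth 0 s i.-1))
  else if occurs pat_p s (i - 2) || occurs pat_q s (i - 2) then
    match last with
    | Some l => (set_nth 0 s i.-1 l, Some (nth 0 s i.-1))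
    | None => (s, last) (* swap with null: never reached *)
    end
  else (s, last).

Definition algA (e : seq int) : seq int :=
  (foldl (algA_step e) (e, None) (iota 1 (size e))).1.

(* Main.v *)
Require Import Defs.
From mathcomp Require Import all_boot all_order all_algebra zify.
Import Order.TTheory GRing.Theory Num.Theory.
Set Implicit Arguments. Unset Strict Implicit.
Local Open Scope ring_scope.

Ltac cmp x y := let h := fresh "h" in case: (ltgtP x y) => h.
Ltac useall :=
  repeat match goal with
  | h : ?x = ?y |- _ => rewrite ?h; move: h
  end;
  repeat match goal with h : is_true (?x < ?y) |- _ =>
    rewrite ?h ?(lt_gtF h) ?(lt_eqF h) ?(gt_eqF h); move: h end.

Lemma red4P (a b c d : int) :
  ((red [:: a; b; c; d] == pat_p) = [&& a < b, c == a & b < d]) /\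
  ((red [:: a; b; c; d] == pat_q) = [&& a < b, c == b & b < d]).
Proof.
rewrite /red /=.
cmp a b; cmp a c; cmp b c; try (exfalso; lia); cmp a d; cmp b d; cmp c d; try (exfalso; lia);
 do 3 (rewrite /= ?inE /=; useall; rewrite ?ltxx ?eqxx /=; intros); split; try done; try lia.
Qed.

Lemma occE pat (s : seq int) j :
  occurs pat s j.+1 = (j.+4 <= size s)%N &&
    (red [:: nth 0 s j; nth 0 s j.+1; nth 0 s j.+2; nth 0 s j.+3] == pat).
Proof.
rewrite /occurs /= addn3.
case: (leqP j.+4 (size s)) => h //=.
rewrite (drop_nth 0 (_ : (j < size s)%N)); last by lia.
rewrite (drop_nth 0 (_ : (j.+1 < size s)%N)); last by lia.
rewrite (drop_nth 0 (_ : (j.+2 < size s)%N)); last by lia.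
rewrite (drop_nth 0 (_ : (j.+3 < size s)%N)); last by lia.
by rewrite /= take0.
Qed.

Lemma occ0 pat (s : seq int) : occurs pat s 0 = false.
Proof. by []. Qed.

Definition ev (s : seq int) (k : nat) : int := nth 0 s k.
Lemma nthE (s : seq int) k : nth 0 s k = ev s k. Proof. by []. Qed.
Arguments ev : simpl never.

Definition OccPQ (a b c d : int) : Prop := a < b /\ b < d /\ (c = a \/ c = b).

Definition W (a a' b b1 x y c : int) : Prop :=
  b1 = b /\ a < b /\ a' < b /\ b < c /\
  ((x = a /\ y = b) \/ (x = b /\ y = a') \/ (x = a' /\ y = a)).

Definition Inv (e : seq int) (i : nat) (st : seq int * option int) : Prop :=
  let: (s, l) := st in
  let E := ev e in let S := ev s in
  size s = size e /\
  (forall k, (i <= k)%N -> S k = E k) /\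
  (forall k, (k < 2)%N -> S k = E k) /\
  (forall k, (k.+2 < i)%N -> S k.+2 <> E k.+2 ->
     (k.+3 < size e)%N /\ W (E k) (S k) (E k.+1) (S k.+1) (E k.+2) (S k.+2) (E k.+3)) /\
  (forall k, (k < i)%N -> (i <= k.+2)%N -> S k <> E k -> l = Some (E k)) /\
  (forall k, (k.+2 < i)%N -> (k.+3 < size e)%N -> S k.+2 = E k.+2 ->
     ~ OccPQ (E k) (E k.+1) (E k.+2) (E k.+3) /\ ~ OccPQ (S k) (S k.+1) (S k.+2) (E k.+3)).

Lemma Inv0 e : Inv e 0 (e, None).
Proof. by do !split => // k; rewrite ltn0. Qed.

Ltac fifs := repeat match goal with |- context [?a == ?b :> nat] =>
  let h := fresh in (have h : (a == b) = false by lia); rewrite h; clear h end.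

Lemma upd e m s l s' l' v :
  Inv e m.+2 (s, l) ->
  size s' = size s ->
  (forall k, ev s' k = if k == m.+2 then v else ev s k) ->
  (v <> ev e m.+2 -> (m.+3 < size e)%N /\
     W (ev e m) (ev s m) (ev e m.+1) (ev s m.+1) (ev e m.+2) v (ev e m.+3)) ->
  (v <> ev e m.+2 -> l' = Some (ev e m.+2)) ->
  ((m.+3 < size e)%N -> v = ev e m.+2 ->
     ~ OccPQ (ev e m) (ev e m.+1) (ev e m.+2) (ev e m.+3) /\
     ~ OccPQ (ev s m) (ev s m.+1) v (ev e m.+3)) ->
  (ev s m.+1 <> ev e m.+1 -> l' = Some (ev e m.+1)) ->
  Inv e m.+3 (s', l').
Proof.
move=> [Hsz [H2 [H01 [H3 [H4 H5]]]]] Hsz' Hs' C1 C2 C3 C4.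
split; first by rewrite Hsz'.
split.
  move=> k hk; rewrite Hs'; case: eqP => [?|_]. lia.
  by apply: H2; lia.
split.
  move=> k hk; rewrite Hs'; case: eqP => [?|_]; first by lia.
  by apply: H01.
split.
  move=> k hk; rewrite !Hs' /=.
  case: (ltngtP k m) => hkm; last first.
  - subst k; rewrite eqxx; fifs; exact: C1.
  - by lia.
  - fifs; by apply: H3; lia.
split.
  move=> k hk1 hk2; rewrite Hs'.
  have [->|->] : k = m.+2 \/ k = m.+1 by lia.
    by rewrite eqxx; exact: C2.
  fifs; exact: C4.
move=> k hk hsz; rewrite !Hs' /=.
case: (ltngtP k m) => hkm; last first.
- subst k; rewrite eqxx; fifs; exact: C3.
- by lia.
- fifs; by apply: H5; lia.
Qed.

Lemma cT (a b c d : int) : [&& a < b, c == d & b < c] \/ [&& a < b, c == a & b < d] -> True.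
Proof. by []. Qed.

Lemma b3T (a b c d x : int) : [&& a < b, c == x & b < d] = true -> a < b /\ c = x /\ b < d.
Proof. by move/and3P=> [-> /eqP -> ->]. Qed.

Lemma b3F (a b c d x : int) : [&& a < b, c == x & b < d] = false -> ~ (a < b /\ c = x /\ b < d).
Proof. move=> h [h1 [h2 h3]]; move: h; by rewrite h1 h2 eqxx h3. Qed.

Lemma modF e i s l p : Inv e i (s, l) -> (p.+1 < i)%N -> ev s p.+1 <> ev e p.+1 ->
  ev s p = ev e p /\ ev e p.+1 <= ev e p /\ ev s p.+1 <= ev e p /\ ev e p.+1 < ev e p.+2 /\ ev s p.+1 < ev e p.+2 /\ (p.+2 < size e)%N.
Proof.
move=> [Hsz [H2 [H01 [H3 [H4 H5]]]]] hp hne.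
case: p hp hne => [|k] hp hne; first by case: hne; apply: H01.
have [hsz [b1 [ab [a'b [bc alt]]]]] := H3 k hp hne.
rewrite b1; case: alt => [[-> ->]|[[-> ->]|[-> ->]]]; lia.
Qed.

Lemma Inv_small e i s l : Inv e i (s, l) -> (i < 2)%N -> Inv e i.+1 (s, l).
Proof.
move=> [Hsz [H2 [H01 [H3 [H4 H5]]]]] hi.
split => //; split; first by move=> k hk; apply: H2; lia.
split => //; split; first by move=> k hk; lia.
split; first by move=> k hk1 hk2 hne; case: hne; apply: H01; lia.
by move=> k hk; lia.
Qed.


Lemma step_inv e i st : (i < size e)%N -> Inv e i st -> Inv e i.+1 (algA_step e st i.+1).
Proof.
case: st => s l.
case: i => [|[|m]] Hi HI.
- rewrite /algA_step (_ : (1 - 2 = 0)%N); last by []. rewrite !occ0; exact: Inv_small.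
- rewrite /algA_step (_ : (2 - 2 = 0)%N); last by []. rewrite !occ0; exact: Inv_small.
rewrite /algA_step (_ : (m.+3 - 2 = m.+1)%N); last by lia.
rewrite (_ : (m.+3 - 3 = m)%N); last by lia.
change (m.+3.-1) with m.+2.
have HI' := HI.
move: HI' => [Hsz [H2 [H01 [H3 [H4 H5]]]]].
rewrite !occE !nthE (H2 m.+2); last by [].
rewrite Hsz.
have FM1 := modF HI (ltnSn m.+1).
have FM0 : ev s m <> ev e m -> ev e m < ev e m.+1 /\ ev s m < ev e m.+1.
  case E: m => [|p] hne; first by case: hne; apply: H01.
  have hp : (p.+1 < m.+2)%N by rewrite E.
  have := modF HI hp hne. lia.
have Hsize : forall v, size (set_nth 0 s m.+2 v) = size s.
  move=> v; rewrite size_set_nth; apply/maxn_idPr; rewrite Hsz; exact: Hi.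
have Hnth : forall v k, ev (set_nth 0 s m.+2 v) k = if k == m.+2 then v else ev s k.
  by move=> v k; rewrite /ev nth_set_nth.
have Hid : forall k, ev s k = if k == m.+2 then ev e m.+2 else ev s k.
  by move=> k; case: eqP => [->|]; [rewrite H2|].
case: (leqP m.+4 (size e)) => hb /=; last first.
  apply: (upd HI erefl Hid); try done.
  - by move=> h; exfalso; clear -h hb; lia.
  - by move=> hne; apply: H4 => //; clear; lia.
have [Pe Qe] := red4P (ev e m) (ev e m.+1) (ev e m.+2) (ev e m.+3).
have [Ps Qs] := red4P (ev s m) (ev s m.+1) (ev e m.+2) (ev s m.+3).
rewrite (H2 m.+3) in Ps Qs; last by [].
rewrite (H2 m.+3); last by [].
rewrite Pe Qe Ps Qs.
set a := ev e m; set b := ev e m.+1; set x := ev e m.+2; set c := ev e m.+3.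
set a' := ev s m; set b' := ev s m.+1.
have E1 : b' <> b -> b <= a /\ b' <= a /\ a' = a.
  by move=> h; have [? [? [? _]]] := FM1 h.
have E0 : a' <> a -> a < b /\ a' < b by [].
clear FM0 FM1.
case: ifP => [/b3T [hab [hx hbc]]|/b3F hp].
  have e1 : b' = b.
    case: (boolP (b' == b)) => /eqP // h; have [h1 _] := E1 h; clear -h1 hab; lia.
  have e0 : a' < b.
    case: (boolP (a' == a)) => /eqP h; first by rewrite h.
    by have [_ ?] := E0 h.
  apply: (upd HI (Hsize _) (Hnth _)).
  - move=> _; split; first exact: hb.
    by rewrite /W; split; [exact: e1|split; [exact: hab|split; [exact: e0|split; [exact: hbc|left]]]].
  - by [].
  - by move=> _ h; exfalso; rewrite -/b' e1 -/x hx in h; clear -h hab; lia.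
  - by move=> h; exfalso; apply: h.
case: ifP => [/b3T [hab [hx hbc]]|/b3F hq].
  have e1 : b' = b.
    case: (boolP (b' == b)) => /eqP // h; have [h1 _] := E1 h; clear -h1 hab; lia.
  have e0 : a' < b.
    case: (boolP (a' == a)) => /eqP h; first by rewrite h.
    by have [_ ?] := E0 h.
  apply: (upd HI (Hsize _) (Hnth _)).
  - move=> _; split; first exact: hb.
    by rewrite /W; split; [exact: e1|split; [exact: hab|split; [exact: e0|split; [exact: hbc|right; left]]]].
  - by [].
  - by move=> _ h; exfalso; rewrite -/a' -/x hx in h; clear -h e0; lia.
  - by move=> h; exfalso; apply: h.
case: ifP => [hs|hs].
  have [h1 [h2 h3]] : a' < b' /\ b' < c /\ (x = a' \/ x = b').
    by case/orP: hs => /b3T [? [? ?]]; do 2 (split => //); [left|right].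
  have hm1 : b' = b.
    case: (boolP (b' == b)) => /eqP // h; have [k1 [k2 k3]] := E1 h; clear -k2 k3 h1; lia.
  have hm0 : a' <> a.
    move=> h; rewrite -/a' -/b' h hm1 in h1 h2 h3.
    by case: h3 => h3; [apply: hp|apply: hq]; do 2 (split => //).
  have [hab ha'b] := E0 hm0.
  have hx : x = a'.
    case: h3 => // h3; exfalso; apply: hq; rewrite -/b' hm1 in h3 h2; do 2 (split => //).
  have hl : l = Some (ev e m) by apply: H4 => //; clear; lia.
  rewrite hl.
  apply: (upd HI (Hsize _) (Hnth _)).
  - move=> _; split; first exact: hb.
    rewrite /W; split; [exact: hm1|split; [exact: hab|split; [exact: ha'b|split; [|right; right]]]].
      by move: h2; rewrite hm1.
    by split.
  - by [].
  - move=> _ h; exfalso; apply: hm0.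
    by rewrite -/a -/x in h; rewrite -hx -h.
  - by move=> h; exfalso; apply: h.
move/negbT: hs; rewrite negb_or => /andP [/negbTE /b3F hs1 /negbTE /b3F hs2].
apply: (upd HI erefl Hid); try done.
- move=> _ _; rewrite /OccPQ; split.
    by move=> [k1 [k2 [k3|k3]]]; [apply: hp|apply: hq]; do 2 (split => //).
  by move=> [k1 [k2 [k3|k3]]]; [apply: hs1|apply: hs2]; do 2 (split => //).
- by move=> hne; apply: H4 => //; clear; lia.
Qed.

Lemma fold_inv e k : forall i st, (i + k <= size e)%N -> Inv e i st ->
  Inv e (i + k) (foldl (algA_step e) st (iota i.+1 k)).
Proof.
elim: k => [|k IH] i st hk HI; first by rewrite addn0.
rewrite /= -addSnnS; apply: IH; first by rewrite addSnnS.
apply: step_inv => //; lia.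
Qed.

Lemma b3eq (a b c d x a' b' c' d' x' : int) :
  (a < b /\ c = x /\ b < d <-> a' < b' /\ c' = x' /\ b' < d') ->
  [&& a < b, c == x & b < d] = [&& a' < b', c' == x' & b' < d'].
Proof.
move=> h.
case E1: [&& a < b, c == x & b < d]; case E2: [&& a' < b', c' == x' & b' < d'] => //.
- by move/b3T: E1 => /h; move/b3F: E2.
- by move/b3T: E2 => /h; move/b3F: E1.
Qed.

Lemma final e : let f := algA e in
  size f = size e /\
  (forall k, (k.+2 < size e)%N -> ev f k.+2 <> ev e k.+2 ->
     (k.+3 < size e)%N /\ W (ev e k) (ev f k) (ev e k.+1) (ev f k.+1) (ev e k.+2) (ev f k.+2) (ev e k.+3)) /\
  (forall k, (k.+3 < size e)%N -> ev f k.+2 = ev e k.+2 ->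
     ~ OccPQ (ev e k) (ev e k.+1) (ev e k.+2) (ev e k.+3) /\ ~ OccPQ (ev f k) (ev f k.+1) (ev f k.+2) (ev e k.+3)).
Proof.
have := fold_inv (k := size e) (i := 0) (st := (e, None)) (leqnn _) (Inv0 e).
rewrite add0n /algA.
case: (foldl _ _ _) => f l /= [Hsz [H2 [H01 [H3 [H4 H5]]]]].
split => //; split.
  by move=> k hk hne; apply: H3.
by move=> k hk heq; apply: H5 => //; lia.
Qed.

Lemma occ_swap e j :
  occurs pat_p e j = occurs pat_q (algA e) j /\ occurs pat_q e j = occurs pat_p (algA e) j.
Proof.
have [Hsz [HW HN]] := final e.
case: j => [|j]; first by rewrite !occ0.
rewrite !occE !nthE Hsz.
case: (leqP j.+4 (size e)) => hb; last by [].
rewrite !andTb.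
have [Pe Qe] := red4P (ev e j) (ev e j.+1) (ev e j.+2) (ev e j.+3).
have [Pf Qf] := red4P (ev (algA e) j) (ev (algA e) j.+1) (ev (algA e) j.+2) (ev (algA e) j.+3).
rewrite Pe Qe Pf Qf.
set f := algA e in HW HN *.
have F3 : ev f j.+3 <> ev e j.+3 ->
    ev f j.+2 = ev e j.+2 /\ ev e j.+1 < ev e j.+2 /\ ev f j.+1 < ev e j.+2.
  move=> hne.
  have [_ hw] := HW j.+1 hb hne.
  move: hw; rewrite /W; lia.
case: (boolP (ev f j.+2 == ev e j.+2)) => /eqP hm.
  have [N1 N2] := HN j hb hm.
  move: N1 N2; rewrite /OccPQ => N1 N2.
  split; apply: b3eq; lia.
have [_ hw] := HW j (ltnW hb) hm.
move: hw; rewrite /W => hw.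
split; apply: b3eq; lia.
Qed.

Theorem theorem3 (e : seq int) :
  Em pat_p e = Em pat_q (algA e) /\ Em pat_q e = Em pat_p (algA e).
Proof.
have [Hsz _] := final e.
rewrite /Em Hsz; split; apply: eq_filter => j; by case: (occ_swap e j).
Qed.
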